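(* Let $D$ be a smooth irreducible complex projective curve with an action of the dihedral group $D_{2l}=\langle i,j\rangle$ (of order $4l$), where $i,j$ are involutions. Let $C=D/\langle j\rangle$ and let $\beta\in\mathrm{Aut}(C)$ be the automorphism induced by $(ij)^l$. Then $\nu(\beta)=\frac12\big(\nu(i)+\nu((ij)^l)\big)$ if $l$ is odd, and $\nu(\beta)=\frac12\big(\nu(j)+\nu((ij)^l)\big)$ if $l$ is even.
   Context: $\nu(\gamma)$ denotes the number of points fixed by an automorphism $\gamma$. The element $(ij)^l$ is central in $D_{2l}$, so it induces an automorphism of $C=D/\langle j\rangle$. *)

(* Defs.v *)
From mathcomp Require Import all_boot.
From mathcomp Require Import boolp classical_sets functions cardinality.
Set Implicit Arguments. Unset Strict Implicit. Unset Printing Implicit Defensive.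
Local Open Scope classical_set_scope.
Local Open Scope card_scope.

Definition nu {T : Type} (f : T -> T) (n : nat) : Prop :=
  [set x | f x = x] #= `I_n.

(* Points of the quotient C = D / <j>: the <j>-orbits {x, j x}. *)
Definition quot_pts {D : Type} (j : D -> D) : set (set D) :=
  [set O | exists x, O = [set x] `|` [set j x]].

(* The map induced on D/<j> by a map z commuting with j: O |-> z(O). *)
Definition induced {D : Type} (z : D -> D) : set D -> set D :=
  fun O => z @` O.

Definition nu_quot {D : Type} (j z : D -> D) (n : nat) : Prop :=
  [set O | quot_pts j O /\ induced z O = O] #= `I_n.

(* Main.v *)
Require Import Defs.
From mathcomp Require Import all_boot.
From mathcomp Require Import boolp classical_sets functions cardinality.
From mathcomp Require Import zify.
Set Implicit Arguments. Unset Strict Implicit.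

Section Dih.
Variables (D : Type) (i j : D -> D).
Hypotheses (hi : forall x, i (i x) = x) (hj : forall x, j (j x) = x).
Let r := i \o j.
Let r' := j \o i.

Lemma r'r x : r' (r x) = x.
Proof. by rewrite /r /r' /= hi hj. Qed.
Lemma rr' x : r (r' x) = x.
Proof. by rewrite /r /r' /= hj hi. Qed.

Lemma iter_r'r a b y : iter a r' (iter (a + b) r y) = iter b r y.
Proof.
elim: a y => [|a IH] y //.
by rewrite iterSr addSn iterS r'r IH.
Qed.

Lemma iter_rr' k y : iter k r (iter k r' y) = y.
Proof. elim: k y => [|k IH] y //. by rewrite iterSr iterS rr' IH. Qed.

Lemma iter_r'r0 k y : iter k r' (iter k r y) = y.
Proof. by have := iter_r'r k 0 y; rewrite addn0. Qed.

Lemma j_iter k x : j (iter k r x) = iter k r' (j x).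
Proof. elim: k x => [|k IH] x //=. by rewrite -IH. Qed.

Lemma iter_r'_r l a b u : (forall x, iter (2 * l) r x = x) -> a + b = 2 * l ->
  iter a r' u = iter b r u.
Proof.
move=> H ab; rewrite -(iter_r'r a b u) ab H //.
Qed.

Lemma key l (hl : 0 < l) (H : forall x, iter (2 * l) r x = x) x :
  j (iter l r (iter l./2 r x)) = iter l./2 r ((if odd l then i else j) x).
Proof.
rewrite -iterD j_iter.
have E := odd_double_half l.
case: (odd l) E => /= E.
- have -> : i x = r (j x) by rewrite /r /= hj.
  rewrite -iterSr. apply: (iter_r'_r _ H).
  rewrite -{1 2 4}E /=; rewrite -!addnn; lia.
- apply: (iter_r'_r _ H). rewrite -{1 2 4}E /=; rewrite -!addnn; lia.
Qed.

End Dih.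
Local Open Scope classical_set_scope.
Local Open Scope card_scope.

Section Quot.
Variables (D : Type) (j z : D -> D).
Hypotheses (hj : forall x, j (j x) = x) (zj : forall x, j (z x) = z (j x)).

Let orb x : set D := [set x] `|` [set j x].

Lemma orbj x : orb (j x) = orb x.
Proof. by rewrite /orb hj setUC. Qed.

Lemma orb_eq x y : orb x = orb y -> y = x \/ y = j x.
Proof. move=> E; have H : orb y y by left. by rewrite -E in H. Qed.

Lemma fixedP x : induced z (orb x) = orb x <-> z x = x \/ z x = j x.
Proof.
split.
- move=> E; have : orb x (z x) by rewrite -E; exists x => //; left.
  by [].
- rewrite /induced /orb image_setU !image_set1 -zj.
  case=> ->; first by [].
  by rewrite hj setUC.
Qed.

Let rep (O : set D) : option D :=
  match pselect (exists x, O x) with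
  | left h => Some (proj1_sig (cid h))
  | right _ => None end.

Lemma rep_orb x : exists y, rep (orb x) = Some y /\ (y = x \/ y = j x).
Proof.
rewrite /rep; case: pselect => [h|h]; last by exfalso; apply: h; exists x; left.
by case: (cid h) => y /= Hy; exists y.
Qed.

Let mark x : bool := `[< rep (orb x) = Some x >].

Lemma mark_j x : j x <> x -> mark (j x) = ~~ mark x.
Proof.
move=> nx; rewrite /mark orbj; have [y [-> [->|->]]] := rep_orb x.
- rewrite (asboolT (erefl _)) asboolF //; by case=> /esym.
- rewrite (asboolT (erefl _)) asboolF //; by case.
Qed.


Let phi (s : D + D) : set D * bool :=
  match s with
  | inl x => (orb x, if `[< j x = x >] then false else mark x)
  | inr x => (orb x, if `[< j x = x >] then true else mark x)
  end.

Let S : set (D + D) :=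
  [set s | match s with inl x => z x = x | inr x => j (z x) = x end].
Let Fb : set (set D) := [set O | quot_pts j O /\ induced z O = O].
Let P : set (set D * bool) := [set p | Fb p.1].

Lemma zjW x : j (z x) = x -> z x = j x.
Proof. by move=> h; rewrite -{2}h hj. Qed.

Lemma phi_bij : set_bij S P phi.
Proof.
split.
- case=> x /= hx; (split; [by exists x|apply/fixedP]); [by left|by right; apply: zjW].
- move=> [x|x] [y|y] /set_mem /= hx /set_mem /= hy [/orb_eq E].
  + case: E => [->//|->]. case: (pselect (j x = x)) => [->//|nx].
    rewrite hj (asboolF nx) asboolF; last by move=> /esym.
    by rewrite mark_j //; case: (mark x).
  + have jx : j x = x.
      case: E => E; subst y; first by rewrite -{2}hy hx.
      by move: hy; rewrite -zj hx hj.
    case: E => E; subst y; first by rewrite (asboolT jx).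
    by rewrite hj (asboolT jx) (asboolT (esym jx)).
  + have jy : j y = y.
      case: E => E; subst y; first by rewrite -{2}hx hy.
      by rewrite hj -{1}hx zj hy.
    case: E => E; subst y; first by rewrite (asboolT jy).
    by move: jy; rewrite hj => jy; rewrite (asboolT jy) (asboolT (esym jy)).
  + case: E => [->//|->]. case: (pselect (j x = x)) => [->//|nx].
    rewrite hj (asboolF nx) asboolF; last by move=> /esym.
    by rewrite mark_j //; case: (mark x).
- move=> [O b] [[x EO] hz]; rewrite /= in EO hz; subst O. move/fixedP: hz => hz.
  case: (pselect (j x = x)) => [jx|nx].
  + have zx : z x = x by case: hz => // ->.
    case: b.
    * by exists (inr x); [rewrite /= zx jx|rewrite /= (asboolT jx)].
    * by exists (inl x); [|rewrite /= (asboolT jx)].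
  + case: hz => hz.
    * case Hb: (b == mark x).
      - by exists (inl x); [|rewrite /= (asboolF nx) (eqP Hb)].
      - exists (inl (j x)); first by rewrite /= -zj hz.
        rewrite /= orbj hj asboolF; last by move=> /esym.
        by rewrite mark_j //; move: Hb; case: b; case: (mark x).
    * case Hb: (b == mark x).
      - by exists (inr x); [rewrite /= hz hj|rewrite /= (asboolF nx) (eqP Hb)].
      - exists (inr (j x)); first by rewrite /= -zj hz hj.
        rewrite /= orbj hj asboolF; last by move=> /esym.
        by rewrite mark_j //; move: Hb; case: b; case: (mark x).
Qed.


Lemma count a b : [set x | z x = x] #= `I_a -> [set x | j (z x) = x] #= `I_b ->
  exists nb, Fb #= `I_nb /\ 2 * nb = a + b.
Proof.
move=> /card_set_bijP [fZ [fZ1 fZ2 fZ3]] /card_set_bijP [fW [fW1 fW2 fW3]].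
have SP : S #= P by apply/card_set_bijP; exists phi; exact: phi_bij.
pose g s := match s with inl x => fZ x | inr x => a + fW x end.
have SI : S #= `I_(a+b).
  apply/card_set_bijP; exists g; split.
  - case=> x /= hx.
    + have := fZ1 x hx; rewrite /=; lia.
    + have := fW1 x hx; rewrite /=; lia.
  - move=> [x|x] [y|y] /set_mem hx /set_mem hy /= E.
    + by congr inl; apply: fZ2 => //; apply/mem_set.
    + have := fZ1 x hx; rewrite /=; lia.
    + have := fZ1 y hy; rewrite /=; lia.
    + by congr inr; apply: fW2; [apply/mem_set|apply/mem_set|lia].
  - move=> k /= hk; case: (ltnP k a) => ka.
    + have [x hx E] := fZ3 k ka. by exists (inl x).
    + have hk' : (k < a + b)%N := hk.
      have hb : `I_b (k - a) by rewrite /=; lia.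
      have [y hy E] := fW3 (k - a) hb. exists (inr y) => //=; lia.
rewrite card_eq_sym in SP.
have PI := card_eq_trans SP SI.
have finFb : finite_set Fb.
  have -> : Fb = fst @` P.
    apply/seteqP; split=> [O hO|_ [[O c] hO <-]] //; by exists (O, false).
  by apply: finite_image; apply/finite_setP; exists (a + b).
case/finite_setP: finFb => nb Hnb; exists nb; split => //.
case/card_set_bijP: (Hnb) => h [h1 h2 h3].
have PJ : P #= `I_(nb.*2).
  apply/card_set_bijP; exists (fun p : set D * bool => (h p.1).*2 + nat_of_bool p.2); split.
  - move=> [O c] /= hO; have := h1 O hO; rewrite /= -!muln2; clear hO; case: c => /=; lia.
  - move=> [O c] [O' c'] /set_mem hO /set_mem hO' /= E.
    have Ec : c = c'.
      by move: (congr1 odd E); rewrite !oddD !odd_double !oddb.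
    subst c'; have E2 : h O = h O' by rewrite -!muln2 in E; lia.
    by rewrite (h2 O O') //; apply/mem_set.
  - move=> k /= hk.
    have [O hO E] := h3 k./2 (ltac:(rewrite /=; rewrite -!muln2 in hk; have := odd_double_half k; rewrite -muln2; lia)).
    exists (O, odd k) => //=; rewrite E addnC; exact: odd_double_half.
rewrite card_eq_sym in PJ.
have /card_eq_II := card_eq_trans PJ PI.
rewrite -muln2; lia.
Qed.

End Quot.

Theorem lemma5p4 (D : Type) (l : nat) (i j : D -> D)
  (hl : (0 < l)%N)
  (hi : forall x, i (i x) = x)
  (hj : forall x, j (j x) = x)
  (hij : forall x, iter (2 * l) (i \o j) x = x)
  (ni nj nz : nat)
  (Hi : nu i ni) (Hj : nu j nj) (Hz : nu (iter l (i \o j)) nz) :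
  exists nb : nat, nu_quot j (iter l (i \o j)) nb /\
    (if odd l then (2 * nb = ni + nz)%N else (2 * nb = nj + nz)%N).
Proof.
set z := iter l (i \o j).
have zj : forall x, j (z x) = z (j x).
  move=> x; rewrite /z j_iter.
  by apply: (iter_r'_r hi hj _ hij); rewrite addnn -muln2 mulnC.
set m := l./2.
set c := if odd l then i else j.
have K : forall x, j (z (iter m (i \o j) x)) = iter m (i \o j) (c x).
  by move=> x; rewrite /z /m /c key.
have injm : injective (iter m (i \o j)).
  by move=> x y /(congr1 (iter m (j \o i))); rewrite !(iter_r'r0 hi hj).
have EW : [set x | j (z x) = x] = iter m (i \o j) @` [set x | c x = x].
  apply/seteqP; split.
  - move=> y /= hy; exists (iter m (j \o i) y); last exact: (iter_rr' hi hj).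
    apply: injm; rewrite -K (iter_rr' hi hj); exact: hy.
  - by move=> _ [x /= hx <-]; rewrite K hx.
have HW : [set x | j (z x) = x] #= `I_(if odd l then ni else nj).
  rewrite EW; apply: card_eq_trans; first by apply: inj_card_eq => x y _ _; apply: injm.
  by rewrite /c; case: (odd l).
have [nb [Hnb E]] := count hj zj Hz HW.
exists nb; split; first exact: Hnb.
by case: (odd l) E; lia.
Qed.
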